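(* Let data $\mathbf X\in\mathcal X$ have distribution $P_\theta$, $\theta\in\Theta$, with $m$ tasks, decision spaces $\mathcal D_i$ and losses $\ell_i:\mathcal D_i\times\Theta\to[0,1]$. Let $\mathbf s^1:\mathcal X\to\{0,1\}^m$ be any selection rule and $d_i:\mathcal X\times[0,1]\to\mathcal D_i$ decision rules such that (i) $d_i$ controls the $\ell_i$-risk: $\mathbb E_\theta[\ell_i(d_i(\mathbf X;q'),\theta)]\le q'$ for all $q'\in[0,1]$ and $\theta\in\Theta$; (ii) $\ell_i(d_i(\mathbf x;q'),\theta)$ is non-decreasing in $q'$. Let $f(m)=m\sum_{j=1}^m(1/j)$, $\mathbf S^1=\mathbf s^1(\mathbf X)$ with selected set $\mathcal S^1=\{i:S^1_i=1\}$, and $D_i^1=d_i(\mathbf X;q|\mathcal S^1|/f(m))$. Then for all $\theta\in\Theta$ and $q\in[0,1]$, $$\mathbb E_\theta\left[\frac{\sum_{i\in\mathcal S^1}\ell_i(D_i^1,\theta)}{1\vee|\mathcal S^1|}\right]\le q.$$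
   Context: No independence between tasks is assumed; $\mathbb E_\theta$ denotes expectation under $P_\theta$. *)

(* Defs.v *)
From HB Require Import structures.
From mathcomp Require Import all_boot all_order all_algebra.
From mathcomp Require Import all_classical all_reals all_analysis.
Set Implicit Arguments. Unset Strict Implicit. Unset Printing Implicit Defensive.
Import Order.TTheory GRing.Theory Num.Theory.
Local Open Scope ring_scope.

Definition fBY {R : realType} (m : nat) : R :=
  m%:R * \sum_(j < m) (j.+1%:R)^-1.

Definition selset (m : nat) (s : 'I_m -> bool) : {set 'I_m} :=
  [set i | s i].

(* Main.v *)
Require Import Defs.
Set Warnings "-all".
From HB Require Import structures.
From mathcomp Require Import all_boot all_order all_algebra.
From mathcomp Require Import all_classical all_reals all_analysis.
From mathcomp Require Import ring lra measurable_realfun.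
Import Order.TTheory GRing.Theory Num.Theory.
Local Open Scope classical_set_scope.
Local Open Scope ring_scope.

Lemma int_mono (R : realType) d (X : measurableType d) (mu : {measure set X -> \bar R})
  (f1 f2 : X -> \bar R) : (forall x, (0 <= f1 x)%E) -> (forall x, (f1 x <= f2 x)%E) ->
  (\int[mu]_x f1 x <= \int[mu]_x f2 x)%E.
Proof.
move=> f10 f12.
have f20 : forall x, (0 <= f2 x)%E by move=> x; exact: (le_trans (f10 x)).
rewrite !ge0_integralTE//; apply: ereal_sup_le => _ [h hf <-]; exists h => //.
by move=> x; exact: (le_trans (hf x)).
Qed.

Lemma PL (R : realType) (a : nat -> R) (n : nat) :
  (forall k, 0 <= a k) -> (forall k, (k < n.+1)%N -> a k <= a k.+1) ->
  forall K, (1 <= K <= n.+1)%N ->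
  a K / K%:R <= \sum_(k < n) a k.+1 / (k.+1 * k.+2)%:R + a n.+1 / n.+1%:R.
Proof.
move=> a0; elim: n => [|n IH] amono K /andP[K1 Kn].
  have -> : K = 1%N by apply/eqP; rewrite eqn_leq Kn K1.
  by rewrite big_ord0 add0r.
have T0 : 0 <= \sum_(k < n.+1) a k.+1 / (k.+1 * k.+2)%:R.
  by apply: sumr_ge0 => k _; apply: divr_ge0.
have [->|KnE] := eqVneq K n.+2.
  by rewrite lerDr.
have Kn' : (K <= n.+1)%N by rewrite -ltnS ltn_neqAle KnE Kn.
apply: (le_trans (IH (fun k kn => amono k (ltnW kn)) K _)); first by rewrite K1 Kn'.
rewrite big_ord_recr /= -addrA lerD2l.
have h := amono n.+1 (ltnSn _).
have e : a n.+1 / n.+1%:R = a n.+1 / (n.+1 * n.+2)%:R + a n.+1 / n.+2%:R.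
  rewrite natrM; field.
  by apply/andP; split; apply: lt0r_neq0; have := ler0n R n; lra.
rewrite e lerD2l ler_pM2r // invr_gt0 ltr0n //.
Qed.

Lemma int_scale (R : realType) d (X : measurableType d) (mu : {measure set X -> \bar R})
  (g : X -> R) (w b : R) : measurable_fun setT g -> (forall x, 0 <= g x) -> 0 <= w ->
  (\int[mu]_x (g x)%:E <= b%:E)%E -> (\int[mu]_x (g x * w)%:E <= (b * w)%:E)%E.
Proof.
move=> mg g0 w0 hb.
rewrite (eq_integral (fun x => w%:E * (g x)%:E)%E); last first.
  by move=> x _; rewrite EFinM muleC.
rewrite ge0_integralZl_EFin //; last first.
  - exact/measurable_EFinP.
  - by move=> x _; rewrite lee_fin.
by rewrite EFinM muleC lee_wpmul2r // lee_fin.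
Qed.

Theorem theorem3 (R : realType) (d : measure_display) (X : measurableType d)
  (Theta : Type) (P : Theta -> probability X R) (m : nat)
  (Dsp : 'I_m -> Type) (loss : forall i : 'I_m, Dsp i -> Theta -> R)
  (s1 : X -> 'I_m -> bool) (dec : forall i : 'I_m, X -> R -> Dsp i)
  (loss01 : forall i (a : Dsp i) th, 0 <= loss i a th <= 1)
  (s1_meas : forall i, measurable [set x | s1 x i])
  (loss_meas : forall i th q', 0 <= q' <= 1 ->
      measurable_fun setT (fun x => loss i (dec i x q') th))
  (risk_ctrl : forall i q' th, 0 <= q' <= 1 ->
      (\int[P th]_x (loss i (dec i x q') th)%:E <= q'%:E)%E)
  (mono : forall i x th q1 q2, 0 <= q1 -> q1 <= q2 -> q2 <= 1 ->
      loss i (dec i x q1) th <= loss i (dec i x q2) th) :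
  forall (th : Theta) (q : R), 0 <= q <= 1 ->
  (\int[P th]_x
     ((\sum_(i in selset (s1 x))
         loss i (dec i x (q * #|selset (s1 x)|%:R / fBY m)) th)
      / Num.max 1 (#|selset (s1 x)|%:R))%:E <= q%:E)%E.
Proof.
move=> th q /andP[q0 q1].
have [m0|mpos] := posnP m.
  subst m.
  rewrite (eq_integral (fun _ => 0%E)); last first.
    by move=> x _; rewrite big1 ?mul0r // => -[].
  by rewrite integral0 lee_fin.
have [n mn] : exists n, m = n.+1 by exists m.-1; rewrite prednK.
subst m; clear mpos.
set f := fBY n.+1.
set Hs := \sum_(j < n.+1) (j.+1%:R)^-1 : R.
have Hs1 : 1 <= Hs.
  rewrite /Hs big_ord_recl /= invr1 lerDl; apply: sumr_ge0 => j _.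
  by rewrite invr_ge0.
have fE : f = n.+1%:R * Hs by [].
have fpos : 0 < f by rewrite fE mulr_gt0 // ?ltr0n //; lra.
have arg : forall k, (k <= n.+1)%N -> 0 <= q * k%:R / f <= 1.
  move=> k kn; apply/andP; split; first by apply: divr_ge0; [apply: mulr_ge0 => //; rewrite ler0n | exact: ltW].
  rewrite ler_pdivrMr // mul1r fE.
  have kn' : k%:R <= n.+1%:R :> R by rewrite ler_nat.
  have k0 : 0 <= k%:R :> R by rewrite ler0n.
  nra.
pose a i x k := loss i (dec i x (q * k%:R / f)) th.
have a0 : forall i x k, 0 <= a i x k by move=> i x k; case/andP: (loss01 i (dec i x (q * k%:R / f)) th).
have am : forall i k, (k <= n.+1)%N -> measurable_fun setT (fun x => a i x k).
  by move=> i k kn; apply: loss_meas; apply: arg.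
have aint : forall i k, (k <= n.+1)%N -> (\int[P th]_x (a i x k)%:E <= (q * k%:R / f)%:E)%E.
  by move=> i k kn; apply: risk_ctrl; apply: arg.
have amono : forall i x k, (k < n.+1)%N -> a i x k <= a i x k.+1.
  move=> i x k kn; apply: mono.
  - by case/andP: (arg k (ltnW kn)).
  - rewrite ler_pM2r ?invr_gt0 // ler_wpM2l // ler_nat //.
  - by case/andP: (arg k.+1 kn).
pose G i x := \sum_(k < n) a i x k.+1 / (k.+1 * k.+2)%:R + a i x n.+1 / n.+1%:R.
have G0 : forall i x, 0 <= G i x.
  move=> i x; apply: addr_ge0; last by apply: divr_ge0; rewrite ?ler0n.
  by apply: sumr_ge0 => k _; apply: divr_ge0; rewrite ?ler0n.
have pw : forall x, (\sum_(i in selset (s1 x)) a i x #|selset (s1 x)|) / Num.max 1 (#|selset (s1 x)|%:R) <= \sum_i G i x.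
  move=> x; set S := selset (s1 x); set K := #|S|.
  have KN : (K <= n.+1)%N by rewrite /K; apply: leq_trans (max_card _) _; rewrite card_ord.
  have [K0|Kpos] := posnP K.
    rewrite (cards0_eq K0).
    by rewrite big_set0 mul0r; apply: sumr_ge0 => i _; apply: G0.
  rewrite (_ : Num.max 1 K%:R = K%:R); last by apply/max_idPr; rewrite ler1n.
  rewrite mulr_suml.
  apply: (le_trans (y := \sum_(i in S) G i x)).
    apply: ler_sum => i _; apply: PL; first by apply: a0.
      by move=> k kn; apply: amono.
    by rewrite Kpos KN.
  rewrite [X in _ <= X](bigID (fun i => i \in S)) /= lerDl.
  by apply: sumr_ge0 => i _; apply: G0.
have Hs0 : Hs != 0 by apply: lt0r_neq0; lra.
have f0 : f != 0 by apply: lt0r_neq0.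
have Gm : forall i, measurable_fun setT (G i).
  move=> i; apply: (measurable_funD (f := fun x => \sum_(k < n) a i x k.+1 / (k.+1 * k.+2)%:R)
    (g := fun x => a i x n.+1 / n.+1%:R)).
    apply: measurable_sum => k; apply: (measurable_funM (f := fun x => a i x k.+1)).
      by apply: am; exact: ltnW (ltn_ord k).
    exact: measurable_cst.
  apply: (measurable_funM (f := fun x => a i x n.+1)); first by apply: am.
  exact: measurable_cst.
apply: (le_trans (@int_mono R _ X (P th) _ (fun x => (\sum_i G i x)%:E) _ _)).
- move=> x; rewrite lee_fin; apply: divr_ge0.
    by apply: sumr_ge0 => i _; apply: a0.
  by rewrite le_max ler01.
- by move=> x; rewrite lee_fin; apply: pw.
rewrite (eq_integral (fun x => \sum_(i < n.+1) (G i x)%:E)%E); last by move=> x _; rewrite sumEFin.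
rewrite ge0_integral_sum //; last 2 first.
  - by move=> i; apply/measurable_EFinP; apply: Gm.
  - by move=> i x _; rewrite lee_fin G0.
apply: (le_trans (y := \sum_(i < n.+1) ((q / f * Hs)%:E))).
  apply: lee_sum => i _.
rewrite (eq_integral (fun x => (\sum_(k < n) a i x k.+1 / (k.+1 * k.+2)%:R)%:E + (a i x n.+1 / n.+1%:R)%:E)%E); last first.
    by move=> x _; rewrite EFinD.
  rewrite ge0_integralD //; last 4 first.
  - by move=> x _; rewrite lee_fin; apply: sumr_ge0 => k _; apply: divr_ge0; rewrite ?ler0n.
  - apply/measurable_EFinP; apply: measurable_sum => k.
    apply: (measurable_funM (f := fun x => a i x k.+1)); last exact: measurable_cst.
    by apply: am; exact: ltnW (ltn_ord k).
  - by move=> x _; rewrite lee_fin; apply: divr_ge0; rewrite ?ler0n.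
  - apply/measurable_EFinP; apply: (measurable_funM (f := fun x => a i x n.+1)); last exact: measurable_cst.
    by apply: am.
  rewrite (eq_integral (fun x => \sum_(k < n) (a i x k.+1 / (k.+1 * k.+2)%:R)%:E)%E); last first.
    by move=> x _; rewrite sumEFin.
  rewrite ge0_integral_sum //; last 2 first.
  - move=> k; apply/measurable_EFinP.
    apply: (measurable_funM (f := fun x => a i x k.+1)); last exact: measurable_cst.
    by apply: am; exact: ltnW (ltn_ord k).
  - by move=> k x _; rewrite lee_fin; apply: divr_ge0; rewrite ?ler0n.
  apply: (le_trans (y := (\sum_(k < n) (q / f * (k.+2%:R)^-1)%:E + (q / f)%:E)%E)).
    apply: leeD.
      apply: lee_sum => k _.
      apply: le_trans; first apply: (@int_scale R _ X (P th) (fun x => a i x k.+1) _ _ _ _ _ (aint i k.+1 _)).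
      + by apply: am; exact: ltnW (ltn_ord k).
      + by move=> x; apply: a0.
      + by rewrite invr_ge0 ler0n.
      + exact: ltnW (ltn_ord k).
      rewrite lee_fin le_eqVlt; apply/orP; left; apply/eqP; rewrite natrM; field.
      by rewrite f0 /=; apply/andP; split; apply: lt0r_neq0; have := ler0n R k; lra.
    apply: le_trans; first apply: (@int_scale R _ X (P th) (fun x => a i x n.+1) _ _ _ _ _ (aint i n.+1 _)).
    + by apply: am.
    + by move=> x; apply: a0.
    + by rewrite invr_ge0 ler0n.
    + by [].
    rewrite lee_fin le_eqVlt; apply/orP; left; apply/eqP; field.
    by rewrite f0 /=; apply: lt0r_neq0; have := ler0n R n; lra.
  rewrite sumEFin -EFinD lee_fin /Hs big_ord_recl /= mulrDr mulr_sumr invr1 mulr1 addrC.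
  rewrite le_eqVlt; apply/orP; left; apply/eqP; congr (_ + _); apply: eq_bigr => k _; rewrite lift0 //.
rewrite sumEFin sumr_const card_ord lee_fin -mulr_natr.
rewrite le_eqVlt; apply/orP; left; apply/eqP; rewrite fE; field.
by apply/andP; split => //; rewrite pnatr_eq0.
Qed.
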